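(* Let $\sigma\in S_n$, let $X$ be a metric space, let $A,B\subseteq X$ be disjoint nonempty closed subsets, and let $\lambda_1,\dots,\lambda_n:X\to\mathbb{C}$ be continuous. Then there exists a continuous map $v:X\to\mathcal{U}(\mathrm{M}_n)$ (a unitary in $\mathrm{M}_n(\mathrm{C}(X))$) such that (i) $v(x)=1_n$ for all $x\in A$; (ii) $v(x)=U[\sigma]$ for all $x\in B$; and (iii) $v(x)$ commutes with $\mathrm{diag}(\lambda_1(x),\dots,\lambda_n(x))$ whenever $\lambda_i(x)=\lambda_{\sigma(i)}(x)$ for every $i\in\{1,\dots,n\}$.
   Context: $\mathcal{U}(\mathrm{M}_n)$ is the unitary group of $\mathrm{M}_n$. For $\pi\in S_n$, $U[\pi]$ denotes the permutation matrix obtained from the identity matrix of $\mathrm{M}_n$ by moving the $i$-th row to the $\pi(i)$-th row, for each $i$. *)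

(* Defs.v *)
From HB Require Import structures.
From mathcomp Require Import all_boot all_order all_algebra all_fingroup.
From mathcomp Require Import all_classical all_reals all_analysis.
From mathcomp Require Import complex.
Set Implicit Arguments. Unset Strict Implicit. Unset Printing Implicit Defensive.
Import Order.TTheory GRing.Theory Num.Theory.
Import numFieldTopology.Exports numFieldNormedType.Exports.
Local Open Scope ring_scope.
Local Open Scope complex_scope.

Definition adjmx (R : rcfType) (n : nat) (M : 'M[R[i]]_n) : 'M[R[i]]_n :=
  (map_mx (fun z : R[i] => z^*%C) M)^T.

Definition unitary_mx (R : rcfType) (n : nat) (U : 'M[R[i]]_n) : Prop :=
  U *m adjmx U = 1%:M /\ adjmx U *m U = 1%:M.

(** U[pi]: the identity with its i-th row moved to row pi(i), for each i;
    i.e. U[pi]_{k j} = 1 iff k = pi(j). *)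
Definition Uperm {R : ringType} (n : nat) (s : 'S_n) : 'M[R]_n :=
  \matrix_(k, j) ((k == s j)%:R).

Definition diagC (R : rcfType) (n : nat) (l : 'I_n -> R[i]) : 'M[R[i]]_n :=
  diag_mx (\row_j l j).

(** The standard (norm-induced) topology on R[i], copied from the regular
    numDomain instance (this is the same instance that numFieldTopology
    gives to any numClosedFieldType). *)
HB.instance Definition _ (R : rcfType) :=
  PseudoPointedMetric.copy R[i] (R[i])^o.

(* Main.v *)
Require Import Defs.
From HB Require Import structures.
From mathcomp Require Import all_boot all_order all_algebra all_fingroup.
From mathcomp Require Import all_classical all_reals all_analysis.
From mathcomp Require Import complex.
From mathcomp Require Import ring lra.
Import Order.TTheory GRing.Theory Num.Theory.
Import numFieldTopology.Exports numFieldNormedType.Exports.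
Local Open Scope classical_set_scope.
Local Open Scope ring_scope.
Lemma RtoC_cont {R : realType} : continuous (fun r : R => (r%:C)%C : R[i]).
Proof.
move=> r. 
apply/(@cvgrPdist_lt _ (R[i])^o) => e e0.
move: e0; rewrite ltcE /= => /andP[/eqP Ie Re0].
have H := (@cvgrPdist_lt _ _ _ (nbhs r) _ id r).1 cvg_id (complex.Re e) Re0.
near=> s.
have hs : `|r - s| < complex.Re e by near: s; exact: H.
rewrite -rmorphB normc_def /= expr0n /= addr0 sqrtr_sqr.
rewrite [X in _ < X]complexE Ie mulr0 addr0 ltcR; exact: hs.
Unshelve. all: end_near.
Qed.

Definition rr {R : realType} (t : R) := (1 - t) * (1 - t) + t * t.
Definition pa {R : realType} (t : R) := ((1 - t) * (1 - t) + t * t)^-1 * (1 - 2 * t).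
Definition pb {R : realType} (t : R) := ((1 - t) * (1 - t) + t * t)^-1 * (2 * t * (1 - t)).
Definition zp {R : realType} (t : R) : R[i] := ((pa t)%:C + 'i%C * (pb t)%:C)%C.

Lemma zpE {R : realType} (t : R) : zp t = (pa t +i* pb t)%C.
Proof. by rewrite /zp; simpc. Qed.

Lemma zp_unit {R : realType} (t : R) : zp t * (zp t)^*%C = 1.
Proof.
rewrite zpE /=; simpc.
apply/eqP; rewrite eq_complex /=; apply/andP; split; apply/eqP; last first.
  by rewrite mulrC addrC subrr.
rewrite /pa /pb.
have h : (1 - t) * (1 - t) + t * t != 0 by rewrite gt_eqF //; nra.
by field.
Qed.

Lemma zp0 {R : realType} : zp (0 : R) = 1.
Proof.
rewrite zpE /pa /pb; apply/eqP; rewrite eq_complex /=; apply/andP; split; apply/eqP.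
  by rewrite !(subr0, mulr0, mul1r, addr0, invr1).
by rewrite !(mulr0, mul0r).
Qed.

Lemma zp1 {R : realType} : zp (1 : R) = -1.
Proof.
rewrite zpE /pa /pb; apply/eqP; rewrite eq_complex /=; apply/andP; split; apply/eqP.
  rewrite subrr mul0r add0r mul1r invr1 mul1r mulr1; lra.
by rewrite subrr !mulr0 oppr0.
Qed.

Lemma pa_cont {R : realType} : continuous (@pa R).
Proof.
move=> t; apply: cvgM.
  apply: cvgV. rewrite gt_eqF //; nra.
  by apply: cvgD; apply: cvgM; try apply: cvgB; try exact: cvg_cst; exact: cvg_id.
apply: cvgB; [exact: cvg_cst|]. apply: cvgM; [exact: cvg_cst|exact: cvg_id].
Qed.

Lemma pb_cont {R : realType} : continuous (@pb R).
Proof.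
move=> t; apply: cvgM.
  apply: cvgV. rewrite gt_eqF //; nra.
  by apply: cvgD; apply: cvgM; try apply: cvgB; try exact: cvg_cst; exact: cvg_id.
apply: cvgM; [apply: cvgM; [exact: cvg_cst|exact: cvg_id]|].
apply: cvgB; [exact: cvg_cst|exact: cvg_id].
Qed.
Lemma cont_addC {R : realType} {T : topologicalType} (f g : T -> R[i]) :
  continuous f -> continuous g -> continuous (fun x => f x + g x).
Proof. move=> hf hg x; exact: (@cvgD _ (R[i])^o _ _ _ _ _ _ _ (hf x) (hg x)). Qed.

Lemma cont_mulC {R : realType} {T : topologicalType} (f g : T -> R[i]) :
  continuous f -> continuous g -> continuous (fun x => f x * g x).
Proof. move=> hf hg x; exact: (@cvgM _ _ _ _ _ _ _ _ (hf x) (hg x)). Qed.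

Lemma cont_cstC {R : realType} {T : topologicalType} (c : R[i]) :
  continuous (fun _ : T => c).
Proof. move=> x; exact: cvg_cst. Qed.

Lemma cont_sumC {R : realType} {T : topologicalType} {I : Type} (r : seq I)
  (F : I -> T -> R[i]) : (forall i, continuous (F i)) ->
  continuous (fun x => \sum_(i <- r) F i x).
Proof.
move=> hF; elim: r => [|h r IH].
  have -> : (fun x => \sum_(i <- [::]) F i x) = (fun _ => 0) by apply/funext => y; rewrite big_nil.
  exact: cont_cstC.
have -> : (fun x => \sum_(i <- h :: r) F i x) = (fun x => F h x + \sum_(i <- r) F i x).
  by apply/funext => y; rewrite big_cons.
exact: (@cont_addC R T (F h) (fun x => \sum_(i <- r) F i x) (hF h) IH).
Qed.

Lemma zp_cont {R : realType} : continuous (@zp R).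
Proof.
rewrite /zp; apply: cont_addC; last apply: cont_mulC; try exact: cont_cstC.
  by move=> t; exact: (continuous_comp (pa_cont t) (RtoC_cont _)).
by move=> t; exact: (continuous_comp (pb_cont t) (RtoC_cont _)).
Qed.

Definition Pm {R : realType} {n : nat} (a b : 'I_n) : 'M[R[i]]_n :=
  \matrix_(k, m) (((k == a)%:R - (k == b)%:R) * ((m == a)%:R - (m == b)%:R) / 2).
Definition Tm {R : realType} {n : nat} (a b : 'I_n) (z : R[i]) : 'M[R[i]]_n :=
  1%:M + (z - 1) *: Pm a b.

Lemma PmP {R : realType} {n : nat} (a b : 'I_n) : a != b ->
  Pm a b *m Pm a b = Pm a b :> 'M[R[i]]_n.
Proof.
move=> ab; apply/matrixP => k l; rewrite !mxE.
under eq_bigr => m _ do rewrite !mxE.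
have ba : b != a by rewrite eq_sym.
rewrite (bigD1 a) //= (bigD1 b) /=; last by rewrite ba.
rewrite big1; last first.
  by move=> m /andP[/negPf -> /negPf ->]; rewrite subrr mulr0 !mul0r.
rewrite !eqxx (negPf ab) (negPf ba).
have h2 : (2 : R[i]) != 0 by rewrite pnatr_eq0.
by rewrite /=; field; done.
Qed.

Lemma Tm_mul {R : realType} {n : nat} (a b : 'I_n) (z w : R[i]) : a != b ->
  Tm a b z *m Tm a b w = Tm a b (z * w).
Proof.
move=> ab; rewrite /Tm mulmxDl !mulmxDr !mul1mx !mulmx1 -!scalemxAl -!scalemxAr.
rewrite PmP // scalerA -addrA -!scalerDl; congr (_ + _ *: _); ring.
Qed.

Lemma Tm1 {R : realType} {n : nat} (a b : 'I_n) : Tm a b 1 = 1%:M :> 'M[R[i]]_n.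
Proof. by rewrite /Tm subrr scale0r addr0. Qed.

Lemma adjmxM {R : rcfType} {n : nat} (A B : 'M[R[i]]_n) :
  adjmx (A *m B) = adjmx B *m adjmx A.
Proof. by rewrite /adjmx map_mxM trmx_mul. Qed.

Lemma adjmx1 {R : rcfType} {n : nat} : adjmx (1%:M : 'M[R[i]]_n) = 1%:M.
Proof. by rewrite /adjmx map_mx1 trmx1. Qed.

Lemma adj_Tm {R : realType} {n : nat} (a b : 'I_n) (z : R[i]) :
  adjmx (Tm a b z) = Tm a b (z^*)%C.
Proof.
apply/matrixP => k l; rewrite /adjmx !mxE.
rewrite rmorphD !rmorphM !rmorphB rmorph1 !rmorph_nat rmorphV ?rmorph_nat; last first.
  by rewrite unitfE pnatr_eq0.
by rewrite eq_sym [X in _ * (X / 2)]mulrC.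
Qed.

Lemma Tm_unitary {R : realType} {n : nat} (a b : 'I_n) (z : R[i]) : a != b ->
  z * (z^*)%C = 1 -> unitary_mx (Tm a b z).
Proof.
move=> ab hz; rewrite /unitary_mx adj_Tm !Tm_mul // [_ * z]mulrC hz Tm1 //.
Qed.

Ltac simp_neq := repeat match goal with
 | H : is_true (?x != ?y) |- context [?x == ?y] => rewrite (negPf H)
 | H : is_true (?x != ?y) |- context [?y == ?x] => rewrite [y == x]eq_sym (negPf H)
 end.

Lemma Tm_m1 {R : realType} {n : nat} (a b : 'I_n) : a != b ->
  Tm a b (-1) = Uperm (tperm a b) :> 'M[R[i]]_n.
Proof.
move=> ab; apply/matrixP => k l; rewrite /Tm /Uperm !mxE.
have h2 : (2 : R[i]) != 0 by rewrite pnatr_eq0.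
case: (eqVneq k a) => [->|ka]; case: (eqVneq l a) => [->|la];
case: (eqVneq k b) => [kb|kb]; case: (eqVneq l b) => [lb|lb];
  try subst; try (by move: ab; rewrite eqxx);
  rewrite ?tpermL ?tpermR; try (rewrite tpermD ?(eq_sym a l) ?(eq_sym b l) //);
  rewrite ?eqxx; simp_neq; rewrite /=; try (field; done).
Qed.

Lemma Uperm_mul {R : ringType} {n : nat} (s t : 'S_n) :
  Uperm (s * t) = Uperm t *m Uperm s :> 'M[R]_n.
Proof.
apply/matrixP => k l; rewrite !mxE (bigD1 (s l)) //= big1 ?addr0.
  by rewrite !mxE permM eqxx mulr1.
by move=> m /negPf ml; rewrite !mxE eq_sym ml mulr0.
Qed.

Lemma Uperm1 {R : ringType} {n : nat} : Uperm 1 = 1%:M :> 'M[R]_n.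
Proof. by apply/matrixP => k l; rewrite !mxE perm1 eq_sym. Qed.

Lemma Tm_comm {R : realType} {n : nat} (a b : 'I_n) (z : R[i]) (l : 'I_n -> R[i]) :
  l a = l b -> Tm a b z *m diagC l = diagC l *m Tm a b z.
Proof.
move=> lab; rewrite /diagC mul_mx_diag mul_diag_mx.
apply/matrixP => k m; rewrite !mxE.
case: (eqVneq k m) => [->|km]; first by rewrite mulrC.
case: (eqVneq k a) => [ka|ka]; case: (eqVneq m a) => [ma|ma];
case: (eqVneq k b) => [kb|kb]; case: (eqVneq m b) => [mb|mb];
  try subst; try (by move: km; rewrite eqxx);
  rewrite ?eqxx; simp_neq; rewrite /=; 
  rewrite ?subrr ?mulr0 ?mul0r ?sub0r ?subr0 ?mulrN ?mulNr ?add0r ?addr0; 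
  try (by rewrite mulrC); try (by rewrite mulrC lab); try (by rewrite mulrC -lab).
all: by rewrite ?mulr0 ?mul0r.
Qed.

Lemma Tm_cont {R : realType} {n : nat} {T : topologicalType} (a b : 'I_n)
  (zf : T -> R[i]) : continuous zf -> forall k m,
  continuous (fun x => Tm a b (zf x) k m).
Proof.
move=> hz k m; rewrite /Tm.
have -> : (fun x => (1%:M + (zf x - 1) *: Pm a b) k m) =
  (fun x => (1%:M : 'M[R[i]]_n) k m + (zf x + (-1)) * Pm a b k m).
  by apply/funext => x; rewrite !mxE.
apply: cont_addC; first exact: cont_cstC.
apply: cont_mulC; last exact: cont_cstC.
exact: (@cont_addC R T zf (fun _ => -1) hz (cont_cstC _)).
Qed.


Lemma main_ind {R : realType} {n : nat} (T : topologicalType) (zf : T -> R[i])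
  (hz : continuous zf) (hzu : forall x, zf x * (zf x)^*%C = 1)
  (lambda : 'I_n -> T -> R[i]) (s : 'S_n) :
  exists v : T -> 'M[R[i]]_n,
    (forall k l, continuous (fun x => v x k l)) /\
    (forall x, unitary_mx (v x)) /\
    (forall x, zf x = 1 -> v x = 1%:M) /\
    (forall x, zf x = -1 -> v x = Uperm s) /\
    (forall x, (forall k, lambda k x = lambda (s k) x) ->
       v x *m diagC (fun k => lambda k x) = diagC (fun k => lambda k x) *m v x).
Proof.
move: {2}#|[pred k | s k != k]| (leqnn #|[pred k | s k != k]|) => N.
elim: N s => [|N IH] s hN.
  have s1 : s = 1%g.
    apply/permP => k; rewrite perm1; apply/eqP; apply: contraTT hN => sk.
    rewrite -ltnNge; apply/card_gt0P; exists k; by rewrite inE.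
  exists (fun _ => 1%:M); split; first by move=> k l; exact: cont_cstC.
  split; first by move=> x; rewrite /unitary_mx adjmx1 mulmx1.
  split; first by [].
  split; first by move=> x _; rewrite s1 Uperm1.
  by move=> x _; rewrite mul1mx mulmx1.
case: (pickP (fun k => s k != k)) => [a sa|none]; last first.
  apply: IH; rewrite eq_card0 // => k; by rewrite !inE none.
set b := s a.
have ab : a != b by rewrite eq_sym.
set s' := (s * tperm a b)%g.
have hs : s = (s' * tperm a b)%g by rewrite /s' -mulgA tperm2 mulg1.
have hcard : (#|[pred k | s' k != k]| <= N)%N.
  rewrite -ltnS; apply: leq_trans hN; apply: proper_card; apply/properP; split.
    apply/fintype.subsetP => k; rewrite !inE; apply: contraNN => /eqP sk.
    have ak : a != k by apply/eqP => ak; move: sa; rewrite ak sk eqxx.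
    have bk : b != k.
      apply/eqP => bk; have ak' : a = k by apply: (@perm_inj _ s); rewrite -/b bk sk.
      by move: ak; rewrite ak' eqxx.
    by rewrite /s' permM sk tpermD.
  exists a; first by rewrite inE.
  by rewrite inE /s' permM tpermR eqxx.
have [v' [hc [hu [h1 [hm1 hcomm]]]]] := IH s' hcard.
exists (fun x => Tm a b (zf x) *m v' x); split.
  move=> k l; have -> : (fun x => (Tm a b (zf x) *m v' x) k l) =
      (fun x => \sum_(m <- index_enum 'I_n) Tm a b (zf x) k m * v' x m l).
    by apply/funext => x; rewrite !mxE.
  apply: cont_sumC => m; apply: cont_mulC; [exact: Tm_cont|exact: hc].
split.
  move=> x; have [u1 u2] := hu x; have [t1 t2] := @Tm_unitary R n a b (zf x) ab (hzu x).
  rewrite /unitary_mx adjmxM; split.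
    by rewrite mulmxA -(mulmxA _ (v' x)) u1 mulmx1 t1.
  by rewrite mulmxA -(mulmxA _ (adjmx (Tm _ _ _))) t2 mulmx1 u2.
split.
  by move=> x zx; rewrite zx Tm1 h1 // mul1mx.
split.
  by move=> x zx; rewrite zx Tm_m1 // hm1 // hs Uperm_mul.
move=> x hl.
have lab : lambda a x = lambda b x by rewrite hl.
have lt : forall y, lambda (tperm a b y) x = lambda y x.
  by move=> y; case: tpermP => [->|->|] //.
have hl' : forall k, lambda k x = lambda (s' k) x.
  by move=> k; rewrite /s' permM lt -hl.
by rewrite -mulmxA hcomm // !mulmxA Tm_comm.
Qed.


Theorem lemma2p5 (R : realType) (n : nat) (sigma : 'S_n)
    (X : metricType R) (A B : set X)
    (hA0 : A !=set0) (hB0 : B !=set0) (hAB : A `&` B = set0)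
    (hAc : closed A) (hBc : closed B)
    (lambda : 'I_n -> X -> R[i])
    (hl : forall k, continuous (lambda k)) :
  exists v : X -> 'M[R[i]]_n,
    (forall k l, continuous (fun x => v x k l)) /\
    (forall x, unitary_mx (v x)) /\
    (forall x, A x -> v x = 1%:M) /\
    (forall x, B x -> v x = Uperm sigma :> 'M[R[i]]_n) /\
    (forall x, (forall k, lambda k x = lambda (sigma k) x) ->
       v x *m diagC (fun k => lambda k x) = diagC (fun k => lambda k x) *m v x).
Proof.
have := (@normal_separatorP R X).1 pseudometric_normal A B hAc hBc hAB.
move=> /(@uniform_separatorP _ R) [f [cf _ fA fB]].
have hz : continuous (fun x => zp (f x)).
  by move=> x; exact: (continuous_comp (cf x) (zp_cont _)).
have [v [hc [hu [h1 [hm1 hcomm]]]]] :=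
  @main_ind R n X (fun x => zp (f x)) hz (fun x => zp_unit (f x)) lambda sigma.
exists v; split => //; split => //; split.
  move=> x Ax; apply: h1; have -> : f x = 0 by apply: fA; exists x.
  exact: zp0.
split => //.
move=> x Bx; apply: hm1; have -> : f x = 1 by apply: fB; exists x.
exact: zp1.
Qed.
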